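(* There exists a language $L$ recognised by a history-deterministic $1$-VASS under coverability acceptance (i.e. $L\in\mathrm{CH}_1$) that is not finitely sequential, i.e. there do not exist finitely many deterministic VASS (of any dimensions) $\mathcal{A}_1,\dots,\mathcal{A}_m$ with $L=L(\mathcal{A}_1)\cup\dots\cup L(\mathcal{A}_m)$, where each $L(\mathcal{A}_i)$ is the language of $\mathcal{A}_i$ under coverability acceptance.
   Context: Fix a finite alphabet $\Sigma$. A $k$-dimensional vector addition system with states ($k$-VASS) is a tuple $(Q,q_0,F,\delta)$ where $Q$ is a finite set of states, $q_0\in Q$ is initial, $F\subseteq Q$ is the set of accepting states, and $\delta\subseteq Q\times\Sigma\times\mathbb{Z}^k\times Q$ is a finite set of transitions (no $\varepsilon$-transitions). A run on a word $w=a_1\cdots a_n$ is a sequence of transitions $(p_{i-1},a_i,d_i,p_i)$ with $p_0=q_0$ such that the counter vectors $v_0=\vec 0$, $v_i=v_{i-1}+d_i$ all lie in $\mathbb{N}^k$. Under coverability acceptance the run is accepting if $p_n\in F$. The language is the set of words having an accepting run. A VASS is deterministic if for every state $q$ and letter $a$ there is at most one transition $(q,a,d,q')$. A VASS is history-deterministic if there is a resolver, i.e. a function $r$ mapping each finite sequence of transitions and each letter $a$ to a transition labelled $a$, such that for every word $w$ in the language, the sequence of transitions obtained by successively applying $r$ to the letters of $w$ is a run on $w$ (counters stay nonnegative) and is accepting. $\mathrm{CH}_1$ is the class of languages recognised by history-deterministic $1$-VASS under coverability acceptance. A language is finitely sequential if it is the union of the languages of finitely many deterministic VASS. *)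

(* Defs.v *)
From mathcomp Require Import all_boot all_algebra.
Set Implicit Arguments. Unset Strict Implicit. Unset Printing Implicit Defensive.
Import GRing.Theory Num.Theory.
Local Open Scope ring_scope.

(* No epsilon transitions. *)
Record VASS (Sigma : finType) (k : nat) := mkVASS {
  vstate : finType;
  vinit : vstate;
  vfinal : {set vstate};
  vdelta : seq (vstate * Sigma * {ffun 'I_k -> int} * vstate)
}.

Section VASSDefs.
Variables (Sigma : finType) (k : nat) (A : VASS Sigma k).

Definition trans := (vstate A * Sigma * {ffun 'I_k -> int} * vstate A)%type.

Definition tsrc (t : trans) : vstate A := t.1.1.1.
Definition tlet (t : trans) : Sigma := t.1.1.2.
Definition tupd (t : trans) : {ffun 'I_k -> int} := t.1.2.
Definition ttgt (t : trans) : vstate A := t.2.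

Definition vadd (v d : {ffun 'I_k -> int}) : {ffun 'I_k -> int} :=
  [ffun i => v i + d i].

Definition zero_vec : {ffun 'I_k -> int} := [ffun _ => 0].

Fixpoint is_run_from (p : vstate A) (v : {ffun 'I_k -> int})
    (ts : seq trans) (w : seq Sigma) : Prop :=
  match ts, w with
  | [::], [::] => True
  | t :: ts', a :: w' =>
      t \in vdelta A /\ tsrc t = p /\ tlet t = a /\
      (forall i, 0 <= vadd v (tupd t) i) /\
      is_run_from (ttgt t) (vadd v (tupd t)) ts' w'
  | _, _ => False
  end.

Definition last_state (ts : seq trans) : vstate A :=
  last (vinit A) (map ttgt ts).

Definition is_run (ts : seq trans) (w : seq Sigma) : Prop :=
  is_run_from (vinit A) zero_vec ts w.

(* Coverability acceptance: the run ends in an accepting state. *)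
Definition is_accepting_run (ts : seq trans) (w : seq Sigma) : Prop :=
  is_run ts w /\ last_state ts \in vfinal A.

Definition lang (w : seq Sigma) : Prop :=
  exists ts, is_accepting_run ts w.

Definition deterministic : Prop :=
  forall t1 t2, t1 \in vdelta A -> t2 \in vdelta A ->
    tsrc t1 = tsrc t2 -> tlet t1 = tlet t2 -> t1 = t2.

Definition resolver := seq trans -> Sigma -> trans.

Definition is_resolver (r : resolver) : Prop :=
  forall h a, r h a \in vdelta A /\ tlet (r h a) = a.

Fixpoint resolve_aux (r : resolver) (h : seq trans) (w : seq Sigma) :
    seq trans :=
  match w with
  | [::] => [::]
  | a :: w' => let t := r h a in t :: resolve_aux r (rcons h t) w'
  end.

Definition resolve (r : resolver) (w : seq Sigma) : seq trans :=
  resolve_aux r [::] w.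

Definition history_deterministic : Prop :=
  exists r : resolver, is_resolver r /\
    forall w, lang w -> is_accepting_run (resolve r w) w.

End VASSDefs.

Definition in_CH1 (Sigma : finType) (L : seq Sigma -> Prop) : Prop :=
  exists A : VASS Sigma 1,
    history_deterministic A /\ forall w, L w <-> lang A w.

Definition finitely_sequential (Sigma : finType) (L : seq Sigma -> Prop)
    : Prop :=
  exists (m : nat) (dims : 'I_m -> nat) (As : forall i : 'I_m, VASS Sigma (dims i)),
    (forall i, deterministic (As i)) /\
    forall w, L w <-> exists i : 'I_m, lang (As i) w.

(* Main.v *)
Require Import Defs.
From mathcomp Require Import all_boot all_algebra zify.
Set Implicit Arguments. Unset Strict Implicit. Unset Printing Implicit Defensive.

Section Gen.
Variables (Sigma : finType) (k : nat) (A : VASS Sigma k).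

Lemma run_size p v ts w : is_run_from (A:=A) p v ts w -> size ts = size w.
Proof.
elim: ts p v w => [|t ts IH] p v [|x w] //= [_ [_ [_ [_ H]]]].
by rewrite (IH _ _ _ H).
Qed.

Lemma run_take p v ts w i : is_run_from (A:=A) p v ts w ->
  is_run_from (A:=A) p v (take i ts) (take i w).
Proof.
elim: ts p v w i => [|t ts IH] p v [|x w] [|i] //= [H1 [H2 [H3 [H4 H]]]].
by do 4 (split => //); apply: IH.
Qed.

Lemma run_nth p v ts w i (t0 : trans A) (x0 : Sigma) :
  is_run_from (A:=A) p v ts w -> i < size w ->
  [/\ nth t0 ts i \in vdelta A, tsrc (nth t0 ts i) = last p (map (@ttgt _ _ A) (take i ts))
   & tlet (nth t0 ts i) = nth x0 w i].
Proof.
elim: ts p v w i => [|t ts IH] p v [|x w] [|i] //= [H1 [H2 [H3 [H4 H]]]] Hi.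
  by [].
exact: IH H Hi.
Qed.

Lemma run_unique p v ts ts' w : deterministic A ->
  is_run_from (A:=A) p v ts w -> is_run_from (A:=A) p v ts' w -> ts = ts'.
Proof.
move=> Hd; elim: ts ts' p v w => [|t ts IH] [|t' ts'] p v [|x w] //=.
move=> [H1 [H2 [H3 [H4 H]]]] [H1' [H2' [H3' [H4' H']]]].
have E : t = t' by apply: Hd => //; congruence.
subst t'; congr (_ :: _); exact: IH H H'.
Qed.

Definition st p (ts : seq (trans A)) i := last p (map (@ttgt _ _ A) (take i ts)).

Lemma st_succ p ts i t0 : i < size ts -> st p ts i.+1 = ttgt (nth t0 ts i).
Proof. by move=> Hi; rewrite /st (take_nth t0 Hi) map_rcons last_rcons. Qed.

Lemma det_step p v ts w i j (t0 : trans A) (x0 : Sigma) : deterministic A ->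
  is_run_from (A:=A) p v ts w -> i < size w -> j < size w ->
  st p ts i = st p ts j -> nth x0 w i = nth x0 w j -> st p ts i.+1 = st p ts j.+1.
Proof.
move=> Hd Hr Hi Hj Es Ex.
have Hs := run_size Hr.
have [a1 a2 a3] := run_nth t0 x0 Hr Hi.
have [b1 b2 b3] := run_nth t0 x0 Hr Hj.
rewrite (st_succ _ t0) ?Hs // (st_succ _ t0) ?Hs //.
congr ttgt; apply: Hd => //; [rewrite a2 b2; exact: Es | congruence].
Qed.

Lemma det_period p v ts (u : seq Sigma) (x : Sigma) n M : deterministic A ->
  is_run_from (A:=A) p v ts (u ++ nseq n x) -> #|vstate A| <= M -> 0 < M ->
  M + M`! <= n -> st p ts (size u + (n - M`!)) = st p ts (size u + n).
Proof.
move=> Hd Hr HQ HM Hn.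
set Q := #|vstate A|.
have Hsz : size (u ++ nseq n x) = size u + n by rewrite size_cat size_nseq.
have t0 : trans A.
  move: (run_size Hr); rewrite Hsz; case: ts {Hr} => [|t ts1] /= H0; last exact t.
  exfalso; have : 0 < M`! by apply: fact_gt0.
  lia.
pose f := fun j : 'I_Q.+1 => st p ts (size u + j).
have : ~~ injectiveb f.
  apply/negP => /injectiveP Hf; have := leq_card f Hf.
  by rewrite card_ord ltnn.
move/injectivePn => [a [b Hab Efab]].
have Hlet : forall j, j < n -> nth x (u ++ nseq n x) (size u + j) = x.
  by move=> j Hj; rewrite nth_cat ltnNge leq_addr /= addKn nth_nseq Hj.
wlog Hlt : a b Hab Efab / a < b.
  move=> W; case: (ltngtP a b) => [H|H|H]; first exact: (W a b).
  - by apply: (W b a) => //; rewrite eq_sym.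
  - by move: Hab; rewrite (val_inj H) eqxx.
have Hb : b <= Q by rewrite -ltnS ltn_ord.
have C1 : forall i, b + i <= n -> st p ts (size u + a + i) = st p ts (size u + b + i).
  elim=> [|i IH] Hi; first by rewrite !addn0.
  rewrite !addnS; apply: (det_step (i:=size u + a + i) (j:=size u + b + i) (x0:=x) t0 Hd Hr).
  - rewrite Hsz; lia.
  - rewrite Hsz; lia.
  - apply: IH; lia.
  - rewrite -!addnA !Hlet //; lia.
set P := b - a.
have HP : P %| M`! by apply: dvdn_fact; rewrite /P; apply/andP; split; lia.
set i0 := n - M`! - a.
have C2 : forall c, a + i0 + c * P <= n ->
    st p ts (size u + a + i0) = st p ts (size u + a + i0 + c * P).
  elim=> [|c IH] Hc; first by rewrite mul0n addn0.
  rewrite IH; last by rewrite mulSn in Hc; lia.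
  have -> : size u + a + i0 + c.+1 * P = size u + b + (i0 + c * P).
    rewrite mulSn /P; have : a < b := Hlt; lia.
  rewrite -C1; first by rewrite addnA.
  rewrite mulSn /P in Hc; have : a < b := Hlt; lia.
have := C2 (M`! %/ P); rewrite divnK //.
have Ha : a <= Q by lia.
have -> : size u + a + i0 = size u + (n - M`!) by rewrite /i0; lia.
have -> : size u + (n - M`!) + M`! = size u + n by lia.
by apply; lia.
Qed.
End Gen.

Definition cv (z : int) : {ffun 'I_1 -> int} := [ffun _ => z].

Definition G : VASS bool 1 :=
  @mkVASS bool 1 bool true [set true]
    [:: (true, true, cv 1, true); (true, false, cv (-1), true);
        (true, false, cv 0, false); (false, true, cv 0, true)].

Definition tA : trans G := (true, true, cv 1, true).
Definition tBd : trans G := (true, false, cv (-1), true).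
Definition tBq : trans G := (true, false, cv 0, false).
Definition tQ : trans G := (false, true, cv 0, true).

Definition step (o : option (bool * nat)) (x : bool) : option (bool * nat) :=
  match o with
  | None => None
  | Some (true, d) => if x then Some (true, d.+1)
                      else if d is d'.+1 then Some (true, d') else Some (false, 0)
  | Some (false, d) => if x then Some (true, d) else None
  end.

Definition best (w : seq bool) := foldl step (Some (true, 0)) w.

Lemma foldl_None w : foldl step None w = None.
Proof. by elim: w. Qed.

Definition Rl (p : bool) (c : int) (Y : bool * nat) : Prop :=
  (0 <= c)%R /\ ((p = Y.1 /\ (c <= (Y.2)%:Z)%R) \/ (p = false /\ Y.1 = true /\ (c <= (Y.2.+1)%:Z)%R)).

Lemma vadd0 (v d : {ffun 'I_1 -> int}) : vadd v d ord0 = (v ord0 + d ord0)%R.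
Proof. by rewrite ffunE. Qed.

Lemma sim (ts : seq (trans G)) (w : seq bool) (p : bool) (v : {ffun 'I_1 -> int}) (Y : bool * nat) : Rl p (v ord0) Y -> is_run_from (A:=G) p v ts w ->
  exists Y' c, foldl step (Some Y) w = Some Y' /\ Rl (last p (map (@ttgt _ _ G) ts)) c Y'.
Proof.
elim: ts w p v Y => [|t ts IH] [|x w] p v Y //=.
  by move=> H _; exists Y, (v ord0).
move=> HR [Hin [Hsrc [Hlet [Hpos Hr]]]].
have Hp0 := Hpos ord0; rewrite vadd0 in Hp0.
suff [Y1 [E1 R1]] : exists Y1, step (Some Y) x = Some Y1 /\
    Rl (ttgt t) (vadd v (tupd t) ord0) Y1.
  have [Y2 [c2 [E2 R2]]] := IH w _ _ _ R1 Hr.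
  by exists Y2, c2; split => //; move: E2; rewrite -E1.
move: HR Hp0; rewrite vadd0.
case: Y => yb yd; rewrite /Rl /=.
move: Hin; rewrite !inE => /or4P [] /eqP Et; subst t;
  rewrite /tsrc /tlet /ttgt /tupd /= in Hsrc Hlet * ; subst p x; rewrite /cv !ffunE;
  case: yb => /=; case: yd => [|yd] /=; move=> [H0 [[E1 H1]|[E2 [E3 H3]]]] //= Hp;
  try (eexists; split; [reflexivity|]); rewrite /=; try lia.
Qed.

Definition r : resolver G := fun h x =>
  match best (map (@tlet _ _ G) h), x with
  | Some (true, _), true => tA
  | Some (true, 0), false => tBq
  | Some (true, _.+1), false => tBd
  | Some (false, _), true => tQ
  | _, true => tA
  | _, false => tBd
  end.

Lemma r_is_resolver : is_resolver r.
Proof.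
move=> h x; rewrite /r; case: (best _) => [[[] [|d]]|]; case: x; by rewrite !inE eqxx ?orbT.
Qed.

Lemma r_step h Y x Y1 : best (map (@tlet _ _ G) h) = Some Y -> step (Some Y) x = Some Y1 ->
  [/\ r h x \in vdelta G, tsrc (r h x) = Y.1, tlet (r h x) = x,
      vadd (cv Y.2%:Z) (tupd (r h x)) = cv Y1.2%:Z & ttgt (r h x) = Y1.1].
Proof.
rewrite /r => ->; case: Y => [[] [|d]]; case: x => //= -[<-];
  split; rewrite ?inE ?eqxx ?orbT //; apply/ffunP => i; rewrite !ffunE /=; lia.
Qed.

Lemma res_run w h Y Y' : best (map (@tlet _ _ G) h) = Some Y ->
  foldl step (Some Y) w = Some Y' ->
  is_run_from (A:=G) Y.1 (cv Y.2%:Z) (resolve_aux r h w) w /\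
  last Y.1 (map (@ttgt _ _ G) (resolve_aux r h w)) = Y'.1.
Proof.
elim: w h Y => [|x w IH] h Y Hb; first by move=> [->].
move=> Hf0; have Hf : foldl step (step (Some Y) x) w = Some Y' := Hf0.
case E: (step (Some Y) x) Hf => [Y1|]; last by rewrite foldl_None.
move=> Hf /=.
have [H1 H2 H3 H4 H5] := r_step Hb E.
have Hb1 : best (map (@tlet _ _ G) (rcons h (r h x))) = Some Y1.
  by rewrite map_rcons /best foldl_rcons -/(best _) Hb H3.
have [IH1 IH2] := IH _ _ Hb1 Hf.
split; last by rewrite H5.
do 3 (split => //); rewrite H4; split; last by rewrite H5.
by move=> i; rewrite ffunE.
Qed.

Lemma best_acc w d : best w = Some (true, d) -> is_accepting_run (resolve r w) w.
Proof.
move=> Hd.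
have [H1 H2] := @res_run w [::] (true, 0) (true, d) erefl Hd.
split; first exact: H1.
by rewrite /last_state H2 inE.
Qed.

Lemma lang_best w : lang G w <-> exists d, best w = Some (true, d).
Proof.
split; last by move=> [d Hd]; exists (resolve r w); apply: best_acc Hd.
move=> [ts [Hr Hf]].
have HR : Rl (vinit G) ((zero_vec 1) ord0) (true, 0) by rewrite /Rl ffunE /=; lia.
have [[yb yd] [c [E R]]] := sim HR Hr.
exists yd; rewrite /best E; congr (Some (_, _)).
move: Hf R; rewrite /last_state inE => /eqP ->; rewrite /Rl /=.
by move=> [_ [[]|[]]].
Qed.

Lemma G_hd : history_deterministic G.
Proof.
exists r; split; first exact: r_is_resolver.
by move=> w /lang_best [d Hd]; apply: best_acc Hd.
Qed.

Lemma fa n d : foldl step (Some (true, d)) (nseq n true) = Some (true, d + n).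
Proof. by elim: n d => [|n IH] d /=; rewrite ?addn0 // IH addnS. Qed.

Lemma fb j d : j <= d -> foldl step (Some (true, d)) (nseq j false) = Some (true, d - j).
Proof.
elim: j d => [|j IH] d H; first by rewrite subn0.
by case: d H => [|d] //= H; rewrite IH // subSS.
Qed.

Lemma fbz d : foldl step (Some (true, d)) (nseq d.+1 false) = Some (false, 0).
Proof. by elim: d => [|d IH] //=. Qed.

Lemma alive_pre (Sigma : finType) k (A : VASS Sigma k) (u v : seq Sigma) :
  (exists ts, is_run (A:=A) ts (u ++ v)) -> exists ts, is_run (A:=A) ts u.
Proof.
move=> [ts H]; exists (take (size u) ts); have := run_take (size u) H.
by rewrite take_size_cat.
Qed.

Theorem mainTheorem7 :
  exists (Sigma : finType) (L : seq Sigma -> Prop),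
    in_CH1 L /\ ~ finitely_sequential L.
Proof.
exists (bool : finType), (lang G); split; first by exists G; split; [exact: G_hd|].
move=> [m [dims [As [Hdet HL]]]].
set M := (\max_(i < m) #|vstate (As i)|).+1.
set K := M`!. set N := K + M.
have HQ i : #|vstate (As i)| <= M by apply: leqW; apply: (leq_bigmax i).
have HK : 0 < K := fact_gt0 M.
have key i y : best y = Some (true, N) ->
    (exists ts, is_run (A:=As i) ts (y ++ nseq N.+1 false)) ->
    ~ lang (As i) (y ++ nseq (N.+1 - K) false).
  move=> Hy [ts Hr] [ts' [Hr' Hf']].
  have Hw' : y ++ nseq (N.+1 - K) false = take (size y + (N.+1 - K)) (y ++ nseq N.+1 false).
    have Ht : take (N.+1 - K) (nseq N.+1 false) = nseq (N.+1 - K) false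
      by apply: take_nseq; apply: leq_subr.
    by rewrite take_cat ltnNge leq_addr /= addKn Ht.
  have E := run_unique (Hdet i) Hr' (eq_ind_r _ (run_take _ Hr) Hw').
  have Hp := det_period (Hdet i) Hr (HQ i) (ltn0Sn _) (_ : M + M`! <= N.+1).
  have Hsz := run_size Hr; rewrite size_cat size_nseq in Hsz.
  suff : lang G (y ++ nseq N.+1 false).
    move/lang_best => [d]; rewrite /best foldl_cat -/(best y) Hy fbz //.
  apply/HL; exists i; exists ts; split => //.
  have Hst : st (vinit (As i)) ts (size y + (N.+1 - K)) = last_state ts.
    rewrite /K Hp; last by rewrite /N -/K; lia.
    by rewrite /st take_oversize // Hsz.
  rewrite -Hst; move: Hf'; rewrite E; exact.
have core : forall (S : {set 'I_m}) y, best y = Some (true, N) ->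
    (forall i, (exists ts, is_run (A:=As i) ts y) -> i \in S) ->
    exists2 i, i \in S & ~ exists ts, is_run (A:=As i) ts (y ++ nseq N.+1 false).
  move=> S y Hy Hal.
  have Hy' : best (y ++ nseq (N.+1 - K) false) = Some (true, N - (N.+1 - K)).
    by rewrite /best foldl_cat -/(best y) Hy fb // /N; lia.
  have [i Hi] := (HL _).1 ((lang_best _).2 (ex_intro _ _ Hy')).
  exists i.
    by apply: Hal; move: Hi => [ts [Hr _]]; apply: alive_pre; exists ts; exact: Hr.
  by move=> H; exact: key i y Hy H Hi.
have ind : forall n (S : {set 'I_m}) y, #|S| <= n -> best y = Some (true, N) ->
    (forall i, (exists ts, is_run (A:=As i) ts y) -> i \in S) -> False.
  elim=> [|n IH] S y HS Hy Hal; have [i HiS Hnot] := core S y Hy Hal.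
    have : 0 < #|S| by apply/card_gt0P; exists i.
    lia.
  apply: (IH (S :\ i) (y ++ nseq N.+1 false ++ true :: nseq N true)).
  - by move: HS; rewrite (cardsD1 i S) HiS.
  - by rewrite /best !foldl_cat -/(best y) Hy fbz /= fa.
  - move=> j Hj; rewrite in_setD1; apply/andP; split.
      apply/eqP => Eji; subst j; apply: Hnot; apply: (@alive_pre _ _ _ _ (true :: nseq N true)).
      by rewrite -catA.
    by apply: Hal; apply: alive_pre Hj.
apply: (ind m setT (nseq N true)).
- by rewrite cardsT card_ord.
- by rewrite /best fa.
- by move=> i _; rewrite in_setT.
Qed.
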